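(* Let $\Delta\ge 4$ be an integer and for positive integers $i,j$ define \[ F(i,j)=(4\Delta-6)\Bigl(\frac{1}{i}+\frac{1}{j}\Bigr)+\Delta^2-6\Delta+3+\frac{6}{\Delta}-(i-j)^2 . \] Then: (a) for every integer $i$ with $3\le i\le \left\lfloor \frac{\Delta+3}{2}\right\rfloor$, the function $j\mapsto F(i,j)$ on the integers $1\le j\le \Delta$ attains its minimum at $j=\Delta$, i.e. $F(i,j)\ge F(i,\Delta)$ for all $1\le j\le \Delta$; (b) for every integer $i$ with $\left\lfloor \frac{\Delta+3}{2}\right\rfloor+1\le i\le \Delta-1$, the function $j\mapsto F(i,j)$ on the integers $1\le j\le \Delta$ attains its minimum at $j=2$, i.e. $F(i,j)\ge F(i,2)$ for all $1\le j\le \Delta$. *)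

(* Defs.v *)
From mathcomp Require Import all_boot all_order all_algebra.
Set Implicit Arguments. Unset Strict Implicit. Unset Printing Implicit Defensive.
Import Order.TTheory GRing.Theory Num.Theory.
Local Open Scope ring_scope.

Definition F (D i j : nat) : rat :=
  (4 * D%:R - 6) * (i%:R^-1 + j%:R^-1) + D%:R ^+ 2 - 6 * D%:R + 3
  + 6 / D%:R - (i%:R - j%:R) ^+ 2.

(* Main.v *)
Require Import Defs.
From mathcomp Require Import all_boot all_order all_algebra.
From mathcomp Require Import zify ring lra.
Import Order.TTheory GRing.Theory Num.Theory.
Local Open Scope ring_scope.

Lemma partA (x y d : rat) : 1 <= y -> y <= d -> 4 <= d -> 2 * x <= d + 3 ->
  0 <= (y - 1) * (y - 2) ->
  0 <= (d - y) * ((4 * d - 6) + y * d * (d + y - 2 * x)).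
Proof.
move=> h1 h2 h3 h4 h5.
have h6 : 0 <= (4 * d - 6) + y * d * (d + y - 2 * x).
  have : 0 <= y * d * (d + 3 - 2 * x) by apply: mulr_ge0; nra.
  nra.
nra.
Qed.

Lemma partB (x y d : rat) : 1 <= y -> y <= d -> 4 <= d -> d + 4 <= 2 * x ->
  x <= d - 1 -> 0 <= (y - 1) * (y - 2) ->
  0 <= (y - 2) * ((2 * x - 2 - y) * 2 * y - (4 * d - 6)).
Proof.
move=> h1 h2 h3 h4 h5 h6.
have [hy|hy] := lerP 2 y.
  have : 0 <= (y - 2) * (d - y) by nra.
  have : 0 <= y * (2 * x - (d + 4)) by nra.
  nra.
have -> : y = 1 by nra.
nra.
Qed.

Theorem lemma4p1 (D : nat) (hD : (4 <= D)%N) :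
  (forall i : nat, (3 <= i)%N -> (i <= (D + 3)./2)%N ->
     forall j : nat, (1 <= j)%N -> (j <= D)%N -> F D i D <= F D i j) /\
  (forall i : nat, ((D + 3)./2 + 1 <= i)%N -> (i <= D - 1)%N ->
     forall j : nat, (1 <= j)%N -> (j <= D)%N -> F D i 2 <= F D i j).
Proof.
have hd : 4 <= D%:R :> rat by rewrite (ler_nat rat 4 D).
have dn0 : D%:R != 0 :> rat by apply/eqP; lra.
have hq : forall j : nat, (1 <= j)%N -> 0 <= (j%:R - 1) * (j%:R - 2) :> rat.
  move=> j hj; case: j hj => [|[|j]] _ //.
  have h1 : 1 <= j.+2%:R :> rat by rewrite (ler_nat rat 1 j.+2).
  have h2 : 2 <= j.+2%:R :> rat by rewrite (ler_nat rat 2 j.+2).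
  apply: mulr_ge0; lra.
split.
- move=> i hi3 hi j hj1 hjD.
  have h2i : (2 * i <= D + 3)%N by lia.
  have y1 : 1 <= j%:R :> rat by rewrite (ler_nat rat 1 j).
  have yd : j%:R <= D%:R :> rat by rewrite ler_nat.
  have x2 : 2 * i%:R <= D%:R + 3 :> rat.
    by rewrite -[2]/(2%:R) -[3]/(3%:R) -natrM -natrD ler_nat.
  have yn0 : j%:R != 0 :> rat by apply/eqP; lra.
  have xn0 : i%:R != 0 :> rat.
    by rewrite pnatr_eq0 -lt0n; lia.
  rewrite -subr_ge0.
  have -> : F D i j - F D i D = (D%:R - j%:R) * ((4 * D%:R - 6)
      + j%:R * D%:R * (D%:R + j%:R - 2 * i%:R)) / (j%:R * D%:R).
    by rewrite /F; field; rewrite dn0 yn0 xn0.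
  apply: divr_ge0; first exact: partA (hq j hj1).
  apply: mulr_ge0; lra.
- move=> i hi hiD j hj1 hjD.
  have h2i : (D + 4 <= 2 * i)%N by lia.
  have hi1 : (i + 1 <= D)%N by lia.
  have y1 : 1 <= j%:R :> rat by rewrite (ler_nat rat 1 j).
  have yd : j%:R <= D%:R :> rat by rewrite ler_nat.
  have x2 : D%:R + 4 <= 2 * i%:R :> rat.
    by rewrite -[2]/(2%:R) -[4]/(4%:R) -natrM -natrD ler_nat.
  have x3 : i%:R + 1 <= D%:R :> rat.
    by rewrite -[1]/(1%:R) -natrD ler_nat.
  have yn0 : j%:R != 0 :> rat by apply/eqP; lra.
  have xn0 : i%:R != 0 :> rat by apply/eqP; lra.
  rewrite -subr_ge0.
  have -> : F D i j - F D i 2 = (j%:R - 2) *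
      ((2 * i%:R - 2 - j%:R) * 2 * j%:R - (4 * D%:R - 6)) / (2 * j%:R).
    by rewrite /F; field; rewrite dn0 yn0 xn0.
  apply: divr_ge0; first by apply: (@partB _ _ _ y1 yd hd x2 _ (hq j hj1)); lra.
  lra.
Qed.
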